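(* Let $d\ge k\ge 0$ be integers. Then $\frac{k+1}{d+k+1}\le f(k,d)\le \frac{k+1}{d+1}$.
   Context: For a graph $G=(V,E)$ and an integer $k\ge 0$, a $k$-independent set is a set $S\subseteq V$ such that the induced subgraph $G[S]$ has maximum degree at most $k$; $\alpha_k(G)$ denotes the maximum cardinality of a $k$-independent set of $G$. $n(G)$ is the number of vertices and $d(G)=2|E(G)|/n(G)$ the average degree. For integers $d,k\ge 0$, $f(k,d)=\inf\left\{\frac{\alpha_k(G)}{n(G)} : G \text{ a finite simple graph with at least one vertex and } d(G)\le d\right\}$. *)

(* Defs.v *)
From Stdlib Require Import Reals.
From mathcomp Require Import all_boot.
Set Implicit Arguments. Unset Strict Implicit. Unset Printing Implicit Defensive.

Definition simple_graph (T : finType) (e : rel T) : Prop :=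
  symmetric e /\ irreflexive e.

Definition edges (T : finType) (e : rel T) : {set {set T}} :=
  [set A : {set T} | [exists x : T, exists y : T, (A == [set x; y]) && e x y]].

Definition k_independent (T : finType) (e : rel T) (k : nat) (S : {set T}) : bool :=
  [forall x in S, #|[set y in S | e x y]| <= k].

Definition alpha_k (T : finType) (e : rel T) (k : nat) : nat :=
  \max_(S : {set T} | k_independent e k S) #|S|.

Local Open Scope R_scope.

Definition nverts (T : finType) : nat := #|T|.
Definition avg_degree (T : finType) (e : rel T) : R :=
  2 * INR #|edges e| / INR (nverts T).

Definition ratio_set (k d : nat) (r : R) : Prop :=
  exists (T : finType) (e : rel T),
    simple_graph e /\ (0 < nverts T)%N /\ avg_degree e <= INR d /\
    r = INR (alpha_k e k) / INR (nverts T).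

Definition is_inf (S : R -> Prop) (r : R) : Prop :=
  (forall x, S x -> r <= x) /\
  (forall l, (forall x, S x -> l <= x) -> l <= r).

Definition f_is (k d : nat) (r : R) : Prop := is_inf (ratio_set k d) r.

(* Main.v *)
Require Import Defs.
From Stdlib Require Import Reals.
From mathcomp Require Import all_boot.
From Stdlib Require Import Reals Lia Lra Psatz.
From mathcomp Require Import all_boot zify.
Set Implicit Arguments. Unset Strict Implicit. Unset Printing Implicit Defensive.

Definition nb (T : finType) (e : rel T) (U : {set T}) (v : T) : nat :=
  #|[set y in U | e v y]|.
Definition ds (T : finType) (e : rel T) (U : {set T}) : nat :=
  \sum_(v in U) nb e U v.

Lemma nb_del (T : finType) (e : rel T) (U : {set T}) (v w : T) :
  nb e U w = nb e (U :\ v) w + ((v \in U) && e w v).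
Proof.
rewrite /nb (cardsD1 v [set y in U | e w y]) inE addnC; congr (_ + _).
by apply: eq_card => y; rewrite !inE; case: (y == v); rewrite ?andbF ?andbT.
Qed.

Lemma sum_bool (T : finType) (A : {set T}) (b : pred T) :
  \sum_(w in A) (b w : nat) = #|[set w in A | b w]|.
Proof.
rewrite -sum1dep_card big_mkcondr /=.
apply: eq_bigr => w _; by case: (b w).
Qed.

Lemma ds_del (T : finType) (e : rel T) (U : {set T}) (v : T) :
  symmetric e -> irreflexive e -> v \in U ->
  ds e U = ds e (U :\ v) + 2 * nb e U v.
Proof.
move=> sym irr vU; rewrite /ds (big_setD1 v vU) /=.
rewrite (eq_bigr (fun w => nb e (U :\ v) w + ((v \in U) && e w v))); last first.
  by move=> w _; rewrite (nb_del e U v w).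
rewrite big_split /= sum_bool.
have -> : #|[set w in U :\ v | (v \in U) && e w v]| = nb e U v.
  rewrite /nb; apply: eq_card => y; rewrite !inE vU /= sym.
  case: (eqVneq y v) => [-> | _] /=; last by [].
  by rewrite irr andbF.
lia.
Qed.

Require Import Defs.

Lemma kindP (T : finType) (e : rel T) (k : nat) (S : {set T}) :
  k_independent e k S <-> (forall x, x \in S -> nb e S x <= k).
Proof.
split.
- by move=> /forallP H x xS; have := H x; rewrite xS.
- by move=> H; apply/forallP => x; apply/implyP => xS; apply: H.
Qed.

Lemma FJ (T : finType) (e : rel T) (k : nat) (U : {set T}) :
  symmetric e -> irreflexive e ->
  exists S : {set T}, S \subset U /\ k_independent e k S /\
    (forall w, w \in U :\: S -> k.+1 <= nb e S w).
Proof.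
move=> sym irr.
pose mu (S : {set T}) := ds e S + 2 * k.+1 * #|U :\: S| + #|S|.
case: (@arg_minnP _ set0 (fun S : {set T} => S \subset U) mu (sub0set U)) => S SU Smin.
exists S; split => //; split.
- apply/kindP => x xS; rewrite leqNgt; apply/negP => Hx.
  have xU : x \in U by apply: (subsetP SU).
  have S'U : (S :\ x) \subset U by apply: subset_trans SU; apply: subsetDl.
  have := Smin _ S'U.
  have E1 := ds_del sym irr xS.
  have E2 : #|U :\: (S :\ x)| = #|U :\: S| + 1.
    have -> : U :\: (S :\ x) = x |: (U :\: S).
      apply/setP => y; rewrite !inE; case: (eqVneq y x) => [-> | ] //=.
    by rewrite (cardsU1 x (U :\: S)) !inE xS /= addnC.
  have E3 := cardsD1 x S; rewrite xS in E3.
  rewrite /mu E1 E2 E3; lia.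
- move=> w; rewrite inE => /andP [wS wU]; rewrite leqNgt; apply/negP => Hw.
  have S'U : (w |: S) \subset U by rewrite subUset sub1set wU SU.
  have := Smin _ S'U.
  have wS' : w \in w |: S by rewrite setU11.
  have E1 := ds_del sym irr wS'.
  have E0 : (w |: S) :\ w = S by rewrite setU1K.
  have E4 : nb e (w |: S) w = nb e S w.
    by rewrite (nb_del e (w |: S) w w) E0 irr andbF addn0.
  have E2 : #|U :\: S| = #|U :\: (w |: S)| + 1.
    have -> : U :\: S = w |: (U :\: (w |: S)).
      apply/setP => y; rewrite !inE; case: (eqVneq y w) => [-> | ] //=.
      by rewrite wS wU.
    by rewrite cardsU1 !inE eqxx /= addnC.
  have E3 : #|w |: S| = #|S| + 1 by rewrite cardsU1 (negbTE wS) addnC.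
  rewrite /mu E1 E0 E4 E2 E3; lia.
Qed.

Lemma nb_split (T : finType) (e : rel T) (U S : {set T}) (w : T) :
  S \subset U -> nb e U w = nb e S w + nb e (U :\: S) w.
Proof.
move=> SU; rewrite /nb -(cardsID S [set y in U | e w y]); congr (_ + _);
  apply: eq_card => y; rewrite !inE.
- case yS: (y \in S); rewrite ?andbF //= (subsetP SU y yS) /=.
  by rewrite andbT.
- by case: (y \in S); case: (y \in U); case: (e w y).
Qed.

Lemma kind0 (T : finType) (e : rel T) (k : nat) : k_independent e k set0.
Proof. by apply/kindP => x; rewrite inE. Qed.

Lemma lovasz (T : finType) (e : rel T) (k : nat) (p : nat) :
  symmetric e -> irreflexive e ->
  forall U : {set T}, (forall v, v \in U -> nb e U v < p * k.+1) ->
  exists S : {set T}, S \subset U /\ k_independent e k S /\ #|U| <= p * #|S|.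
Proof.
move=> sym irr; elim: p => [|p IH] U HU.
  exists set0; split; first exact: sub0set. split; first exact: kind0.
  case: (set_0Vmem U) => [-> | [v vU]]; first by rewrite cards0.
  by have := HU v vU; rewrite mul0n.
have [S [SU [Sind Sdom]]] := FJ k U sym irr.
have HU' : forall v, v \in U :\: S -> nb e (U :\: S) v < p * k.+1.
  move=> v vU'; have := HU v; have := Sdom v vU'.
  have vU : v \in U by move: vU'; rewrite inE => /andP [].
  rewrite (nb_split e v SU) mulSn; move=> H1 H2; have := H2 vU; lia.
have [S' [S'U [S'ind S'c]]] := IH _ HU'.
have cU : #|U| = #|S| + #|U :\: S|.
  by rewrite -(cardsID S U) (setIidPr SU).
case: (leqP #|S'| #|S|) => H.
- exists S; split => //; split => //; rewrite mulSn; nia.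
- exists S'; split; first by apply: subset_trans S'U (subsetDl _ _).
  split => //; rewrite mulSn; nia.
Qed.

Lemma alpha_ge (T : finType) (e : rel T) (k : nat) (S : {set T}) :
  k_independent e k S -> #|S| <= alpha_k e k.
Proof. by move=> H; rewrite /alpha_k; apply: (@leq_bigmax_cond _ (fun S0 : {set T} => k_independent e k S0) (fun S0 => #|S0|) S H). Qed.

Lemma layer (T : finType) (e : rel T) (k : nat) :
  symmetric e -> irreflexive e ->
  forall L (U : {set T}),
  2 * k.+1 * L * #|U| <= k.+1 * alpha_k e k * L * L.+1 + ds e U.
Proof.
move=> sym irr; elim => [|L IHL] U; first by rewrite !muln0 mul0n.
have : #|U| <= #|U| by [].
move: {2}#|U| => n; elim: n U => [|n IHn] U HUn.
  have -> : #|U| = 0 by lia. by rewrite muln0.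
case: (boolP [exists v in U, L.+1 * k.+1 <= nb e U v]).
- move/existsP => [v /andP [vU Hv]].
  have c1 := cardsD1 v U; rewrite vU in c1.
  have := IHn (U :\ v) ltac:(lia).
  rewrite (ds_del sym irr vU); nia.
- move/existsPn => Hall.
  have HU : forall v, v \in U -> nb e U v < L.+1 * k.+1.
    by move=> v vU; have := Hall v; rewrite vU /= ltnNge.
  have [S [SU [Sind Sc]]] := lovasz sym irr HU.
  have Sa := alpha_ge Sind.
  have H1 : #|U| <= L.+1 * alpha_k e k.
    by apply: (leq_trans Sc); rewrite leq_mul2l Sa orbT.
  have H2 := leq_mul (leqnn (2 * k.+1)) H1.
  have := IHL U.
  set a := alpha_k e k; set u := #|U|; set D := ds e U; set c := k.+1.
  move: H2; nia.
Qed.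

Lemma fiber2 (T : finType) (e : rel T) (x y : T) :
  symmetric e -> irreflexive e -> e x y ->
  #|[set p : T * T | e p.1 p.2 && ([set p.1; p.2] == [set x; y])]| = 2.
Proof.
move=> sym irr exy.
have xy : x != y by apply/eqP => E; move: exy; rewrite E irr.
have -> : [set p : T * T | e p.1 p.2 && ([set p.1; p.2] == [set x; y])]
          = [set (x, y); (y, x)].
  apply/setP => [[a b]]; rewrite !inE /=.
  apply/idP/idP.
  - move=> /andP [eab /eqP E].
    have ab : a != b by apply/eqP => E'; move: eab; rewrite E' irr.
    have aA : a \in [set x; y] by rewrite -E !inE eqxx.
    have bA : b \in [set x; y] by rewrite -E !inE eqxx orbT.
    move: aA bA; rewrite !inE => /orP [/eqP ax | /eqP ay] /orP [/eqP bx | /eqP by'];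
      subst; rewrite ?eqxx //=.
    + by move: ab; rewrite eqxx.
    + by rewrite orbT.
    + by move: ab; rewrite eqxx.
  - case/orP => /eqP [-> ->]; first by rewrite exy eqxx.
    by rewrite sym exy setUC eqxx.
rewrite cards2; case: eqP => //= [[E _]]; by move: xy; rewrite E eqxx.
Qed.

Lemma handshake (T : finType) (e : rel T) :
  symmetric e -> irreflexive e -> ds e setT = 2 * #|edges e|.
Proof.
move=> sym irr.
have E1 : ds e setT = #|[set p : T * T | e p.1 p.2]|.
  rewrite /ds /nb.
  transitivity (\sum_(v in [set: T]) \sum_(y in [set: T]) (e v y : nat)).
    apply: eq_bigr => x _. by rewrite (sum_bool [set: T] (e x)).
  transitivity (\sum_(v : T) \sum_(y : T) (e v y : nat)).
    rewrite (eq_bigl (fun x => true)); last by move=> x; rewrite inE.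
    apply: eq_bigr => x _; apply: eq_bigl => y; by rewrite inE.
  rewrite pair_big /= -sum1dep_card [RHS]big_mkcond /=.
  by apply: eq_bigr => p _; case: (e p.1 p.2).
rewrite E1 -sum1dep_card.
rewrite (partition_big (fun p : T * T => [set p.1; p.2]) (fun A => A \in edges e)); last first.
  move=> p ep; rewrite /edges inE; apply/existsP; exists p.1; apply/existsP; exists p.2.
  by rewrite eqxx ep.
rewrite mulnC -sum_nat_const; apply: eq_bigr => A.
rewrite /edges inE => /existsP [x /existsP [y /andP [/eqP -> exy]]].
by rewrite sum1dep_card fiber2.
Qed.

Lemma arith_final (c d n b L : nat) :
  0 < c -> L = d %/ c + 1 ->
  2 * c * L * n <= c * b * L * L.+1 + d * n ->
  c * n <= b * (d + c).
Proof.
move=> c0 HL H.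
have dm : d = d %/ c * c + d %% c by rewrite -divn_eq.
have dl : d %% c < c by rewrite ltn_mod.
set q := d %/ c in dm HL; set r := d %% c in dm dl.
set x := c * L.
have x1 : d < x by rewrite /x HL; nia.
have x2 : x <= d + c by rewrite /x HL; nia.
have K : x * (x + c) <= (d + c) * (2 * x - d) by nia.
have H' : c * n * (2 * x - d) <= b * x * (x + c).
  have : c * (2 * c * L * n) <= c * (c * b * L * L.+1 + d * n) by rewrite leq_mul2l H orbT.
  rewrite /x; nia.
rewrite leqNgt; apply/negP => Hc.
have P : 0 < x * (x + c) by rewrite /x HL; nia.
have : b * x * (x + c) * (d + c) < c * n * (x * (x + c)).
  have -> : b * x * (x + c) * (d + c) = (b * (d + c)) * (x * (x + c)) by nia.
  by rewrite ltn_pmul2r.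
have : c * n * (x * (x + c)) <= c * n * ((d + c) * (2 * x - d)) by rewrite leq_mul2l K orbT.
have : c * n * ((d + c) * (2 * x - d)) <= b * x * (x + c) * (d + c).
  have -> : c * n * ((d + c) * (2 * x - d)) = (c * n * (2 * x - d)) * (d + c) by nia.
  by rewrite leq_mul2r H' orbT.
lia.
Qed.

Lemma lower_nat (T : finType) (e : rel T) (k d : nat) :
  simple_graph e -> 2 * #|edges e| <= d * #|T| ->
  k.+1 * #|T| <= alpha_k e k * (d + k.+1).
Proof.
move=> [sym irr] H.
apply: (@arith_final k.+1 d #|T| (alpha_k e k) (d %/ k.+1 + 1)) => //.
have := layer k sym irr (d %/ k.+1 + 1) setT.
rewrite cardsT handshake //; lia.
Qed.

Lemma complete_simple (n : nat) : simple_graph (fun x y : 'I_n => x != y).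
Proof. by split; [move=> x y; rewrite eq_sym | move=> x; rewrite /= eqxx]. Qed.

Lemma complete_edges (n : nat) :
  2 * #|edges (fun x y : 'I_n => x != y)| = n * n.-1.
Proof.
rewrite -handshake; [|by case: (complete_simple n)..].
rewrite /ds /nb.
rewrite (eq_bigr (fun _ => n.-1)); last first.
  move=> x _; rewrite -[n in n.-1]card_ord -(cardsC1 x); apply: eq_card => y.
  by rewrite !inE eq_sym.
by rewrite sum_nat_const cardsT card_ord.
Qed.

Lemma complete_alpha (n k : nat) :
  alpha_k (fun x y : 'I_n => x != y) k <= k.+1.
Proof.
apply/bigmax_leqP => S /kindP HS.
case: (set_0Vmem S) => [-> | [x xS]]; first by rewrite cards0.
have := HS x xS; rewrite /nb (cardsD1 x S) xS.
have -> : #|[set y in S | x != y]| = #|S :\ x|.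
  by apply: eq_card => y; rewrite !inE eq_sym andbC.
by [].
Qed.

Module RealPart.
Local Open Scope R_scope.

Lemma div_le (a b c e : R) : 0 < b -> 0 < e -> a * e <= c * b -> a / b <= c / e.
Proof.
move=> hb he H.
have -> : a / b = (a * e) * / (b * e) by field; split; apply: Rgt_not_eq.
have -> : c / e = (c * b) * / (b * e) by field; split; apply: Rgt_not_eq.
apply: Rmult_le_compat_r => //; left; apply: Rinv_0_lt_compat; nra.
Qed.

Lemma INR_leq (m n : nat) : (m <= n)%N -> INR m <= INR n.
Proof. by move/leP; apply: le_INR. Qed.

Lemma INR_muln (m n : nat) : INR (m * n) = INR m * INR n.
Proof. by rewrite -mult_INR multE. Qed.

Lemma ratio_lower (k d : nat) (r : R) :
  ratio_set k d r -> INR (k + 1) / INR (d + k + 1) <= r.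
Proof.
move=> [T [e [sg [n0 [havg ->]]]]].
have hn : 0 < INR (nverts T) by apply: lt_0_INR; apply/ltP.
have H2 : (2 * #|edges e| <= d * #|T|)%N.
  have : 2 * INR #|edges e| <= INR d * INR (nverts T).
    move: havg; rewrite /avg_degree => h.
    have := Rmult_le_compat_r (INR (nverts T)) _ _ (Rlt_le _ _ hn) h.
    by rewrite /Rdiv Rmult_assoc Rinv_l ?Rmult_1_r //; apply: Rgt_not_eq.
  rewrite -INR_muln (_ : 2 = INR 2) // -INR_muln /nverts => h.
  by apply/leP; apply: INR_le.
have L := lower_nat k sg H2.
apply: div_le => //.
  apply: lt_0_INR; apply/ltP; rewrite addn1; by [].
rewrite -!INR_muln; apply: INR_leq.
rewrite /nverts; nia.
Qed.

Lemma ratio_nonneg (k d : nat) (r : R) : ratio_set k d r -> 0 <= r.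
Proof.
move=> [T [e [sg [n0 [havg ->]]]]].
apply: Rmult_le_pos; first exact: pos_INR.
by left; apply: Rinv_0_lt_compat; apply: lt_0_INR; apply/ltP.
Qed.

Lemma complete_in (k d : nat) :
  ratio_set k d (INR (alpha_k (fun x y : 'I_(d + 1) => x != y) k) / INR (d + 1)).
Proof.
exists ('I_(d + 1) : finType); exists (fun x y : 'I_(d + 1) => x != y).
split; first exact: complete_simple.
split; first by rewrite /nverts card_ord addn1.
split; last by rewrite /nverts card_ord.
rewrite /avg_degree /nverts card_ord.
have E := complete_edges (d + 1).
have -> : 2 * INR #|edges (fun x y : 'I_(d + 1) => x != y)| = INR (d + 1) * INR d.
  rewrite (_ : 2 = INR 2) // -!INR_muln E addn1 /= mulnC //.
rewrite /Rdiv Rmult_comm -Rmult_assoc Rinv_l ?Rmult_1_l; first exact: Rle_refl.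
apply: Rgt_not_eq; apply: lt_0_INR; apply/ltP; rewrite addn1; by [].
Qed.

Lemma complete_upper (k d : nat) :
  INR (alpha_k (fun x y : 'I_(d + 1) => x != y) k) / INR (d + 1) <=
  INR (k + 1) / INR (d + 1).
Proof.
apply: Rmult_le_compat_r.
  left; apply: Rinv_0_lt_compat; apply: lt_0_INR; apply/ltP; rewrite addn1; by [].
apply: INR_leq; apply: leq_trans (complete_alpha _ _) _; by rewrite addn1.
Qed.

Lemma inf_exists (k d : nat) : exists r, f_is k d r.
Proof.
pose E := fun y => ratio_set k d (- y).
have hb : bound E.
  exists 0 => y Ey; have := ratio_nonneg Ey; lra.
have he : exists y, E y.
  exists (- (INR (alpha_k (fun x y : 'I_(d + 1) => x != y) k) / INR (d + 1))).
  rewrite /E Ropp_involutive; exact: complete_in.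
case: (@completeness E hb he) => m [hub hlub].
exists (- m); split.
- move=> x Sx; have : E (- x) by rewrite /E Ropp_involutive.
  move=> Ex; have := hub _ Ex; lra.
- move=> l hl; have : m <= - l.
    apply: hlub => y Ey; have := hl _ Ey; lra.
  lra.
Qed.

End RealPart.

Theorem mainTheorem8 (d k : nat) (hkd : (k <= d)%N) :
  exists r : R, f_is k d r /\
    Rle (Rdiv (INR (k + 1)) (INR (d + k + 1))) r /\
    Rle r (Rdiv (INR (k + 1)) (INR (d + 1))).
Proof.
have [r hr] := RealPart.inf_exists k d.
exists r; split => //; split.
- apply: (proj2 hr) => x Sx; exact: RealPart.ratio_lower.
- apply: Rle_trans (proj1 hr _ (RealPart.complete_in k d)) _.
  exact: RealPart.complete_upper.
Qed.
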